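(* Let $R>0$, $D>0$, $k\ge0$ an integer and $n\ge k+2$. For every algorithm $\mathcal A\in\mathfrak A_{\mathrm{sep}}$, $$\sup\ \|\nabla\mathbf L(\mathbf z^k)\|^2\ \ge\ \frac{R^2D^2}{(2\lfloor k/2\rfloor+1)^2},$$ where the supremum is over all $R$-smooth convex-concave $\mathbf L$ on $\mathbb R^n\times\mathbb R^n$ having a saddle point $\mathbf z^\star$ and all starting points $\mathbf z^0$ with $\|\mathbf z^0-\mathbf z^\star\|\le D$, and $\mathbf z^k$ is the $k$-th iterate of $\mathcal A$ applied to $\mathbf L$ from $\mathbf z^0$. Consequently, the EAG-C and EAG-V algorithms, which achieve $\|\nabla\mathbf L(\mathbf z^k)\|^2=\mathcal O(R^2\|\mathbf z^0-\mathbf z^\star\|^2/k^2)$, are optimal up to a constant factor in $\mathfrak A_{\mathrm{sep}}$.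
   Context: Write $\mathbf z=(\mathbf x,\mathbf y)$. $\mathbf L$ convex-concave: convex in $\mathbf x$ for fixed $\mathbf y$, concave in $\mathbf y$ for fixed $\mathbf x$; a saddle point $(\mathbf x^\star,\mathbf y^\star)$ satisfies $\mathbf L(\mathbf x^\star,\mathbf y)\le\mathbf L(\mathbf x^\star,\mathbf y^\star)\le\mathbf L(\mathbf x,\mathbf y^\star)$ for all $\mathbf x,\mathbf y$. $\mathbf G(\mathbf z)=(\nabla_{\mathbf x}\mathbf L,-\nabla_{\mathbf y}\mathbf L)$; $R$-smooth means $\mathbf G$ is $R$-Lipschitz. A deterministic algorithm produces $\mathbf z^j=\mathcal A(\mathbf z^0,\dots,\mathbf z^{j-1};\mathbf L)$; $\mathfrak A_{\mathrm{sep}}$ is the class of such algorithms with $\mathbf x^j\in\mathbf x^0+\mathrm{span}\{\nabla_{\mathbf x}\mathbf L(\mathbf z^0),\dots,\nabla_{\mathbf x}\mathbf L(\mathbf z^{j-1})\}$ and $\mathbf y^j\in\mathbf y^0+\mathrm{span}\{\nabla_{\mathbf y}\mathbf L(\mathbf z^0),\dots,\nabla_{\mathbf y}\mathbf L(\mathbf z^{j-1})\}$ for all $j\ge1$. EAG-C: $\mathbf z^{k+1/2}=\mathbf z^k+\frac1{k+2}(\mathbf z^0-\mathbf z^k)-\alpha\mathbf G(\mathbf z^k)$, $\mathbf z^{k+1}=\mathbf z^k+\frac1{k+2}(\mathbf z^0-\mathbf z^k)-\alpha\mathbf G(\mathbf z^{k+1/2})$ with constant $\alpha$; EAG-V is the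 same with step-sizes $\alpha_k$ given by $\alpha_{k+1}=\alpha_k\big(1-\frac{1}{(k+1)(k+3)}\frac{\alpha_k^2R^2}{1-\alpha_k^2R^2}\big)$. *)

(* Defs.v *)
From HB Require Import structures.
From mathcomp Require Import all_boot all_order all_algebra.
From mathcomp Require Import all_classical all_reals all_analysis.
Set Implicit Arguments. Unset Strict Implicit. Unset Printing Implicit Defensive.
Import Order.TTheory GRing.Theory Num.Theory.
Import numFieldNormedType.Exports.
Local Open Scope ring_scope.
Local Open Scope classical_set_scope.

Section Defs.
Variables (R : realType) (n : nat).
Notation vec := 'rV[R]_n.
Notation pt := (vec * vec)%type.

Definition sqnorm (v : vec) : R := \sum_(i < n) (v 0 i) ^+ 2.
Definition znorm (z : pt) : R := Num.sqrt (sqnorm z.1 + sqnorm z.2).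

Definition gradx (L : vec -> vec -> R) (z : pt) : vec :=
  \row_i derive (fun x => L x z.2) z.1 (delta_mx 0 i).
Definition grady (L : vec -> vec -> R) (z : pt) : vec :=
  \row_i derive (fun y => L z.1 y) z.2 (delta_mx 0 i).

Definition Gop (L : vec -> vec -> R) (z : pt) : pt := (gradx L z, - grady L z).

Definition sqgradnorm (L : vec -> vec -> R) (z : pt) : R :=
  sqnorm (gradx L z) + sqnorm (grady L z).

Definition convex_concave (L : vec -> vec -> R) : Prop :=
  (forall y x1 x2 (t : R), 0 <= t <= 1 ->
     L (t *: x1 + (1 - t) *: x2) y <= t * L x1 y + (1 - t) * L x2 y) /\
  (forall x y1 y2 (t : R), 0 <= t <= 1 ->
     t * L x y1 + (1 - t) * L x y2 <= L x (t *: y1 + (1 - t) *: y2)).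

Definition is_saddle (L : vec -> vec -> R) (zs : pt) : Prop :=
  forall x y, L zs.1 y <= L zs.1 zs.2 /\ L zs.1 zs.2 <= L x zs.2.

Definition smooth (Rs : R) (L : vec -> vec -> R) : Prop :=
  (forall z : pt, differentiable (fun p : pt => L p.1 p.2) z) /\
  (forall z z' : pt,
     znorm (Gop L z - Gop L z') <= Rs * znorm (z - z')).

Definition problem_class (Rs : R) (L : vec -> vec -> R) : Prop :=
  smooth Rs L /\ convex_concave L /\ exists zs, is_saddle L zs.

Definition algorithm := (vec -> vec -> R) -> seq pt -> pt.

Fixpoint history (A : algorithm) (L : vec -> vec -> R) (z0 : pt) (j : nat)
  : seq pt :=
  match j with
  | 0 => [:: z0]
  | j'.+1 => let h := history A L z0 j' in rcons h (A L h)
  end.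

Definition iterate (A : algorithm) L z0 (j : nat) : pt :=
  last z0 (history A L z0 j).

(* A in A_sep (relative to the considered problem class): for all j >= 1,
   x^j in x^0 + span{grad_x L(z^0..z^{j-1})}, same for y. *)
Definition in_Asep (Rs : R) (A : algorithm) : Prop :=
  forall (L : vec -> vec -> R) (z0 : pt) (j : nat), problem_class Rs L ->
    (exists c : 'I_j -> R,
        (iterate A L z0 j).1 =
          z0.1 + \sum_(i < j) c i *: gradx L (iterate A L z0 i)) /\
    (exists c : 'I_j -> R,
        (iterate A L z0 j).2 =
          z0.2 + \sum_(i < j) c i *: grady L (iterate A L z0 i)).

Definition worst_case (Rs Dd : R) (A : algorithm) (k : nat) : \bar R :=
  ereal_sup [set e : \bar R | exists (L : vec -> vec -> R) (z0 : pt),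
      [/\ problem_class Rs L,
           (exists zs, is_saddle L zs /\ znorm (z0 - zs) <= Dd) &
           e = (sqgradnorm L (iterate A L z0 k))%:E]].
End Defs.

(* Main.v *)
Require Import Defs.
From HB Require Import structures.
From mathcomp Require Import all_boot all_order all_algebra.
From mathcomp Require Import all_classical all_reals all_analysis.
From mathcomp Require Import zify ring lra.
Import Order.TTheory GRing.Theory Num.Theory.
Import numFieldNormedType.Exports.
Set Implicit Arguments. Unset Strict Implicit. Unset Printing Implicit Defensive.
Local Open Scope ring_scope.

Definition nxtn (N i : nat) : nat :=
  if (i.+1 < N)%N then i.+1 else if i.+1 == N then 0%N else i.
Definition prvn (N i : nat) : nat :=
  if (0 < i)%N && (i < N)%N then i.-1 else if i == 0%N then N.-1 else i.

Lemma nxtn_lt N n i : (N <= n)%N -> (i < n)%N -> (nxtn N i < n)%N.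
Proof. rewrite /nxtn; case: ifP => ?; [lia|case: ifP => ?; lia]. Qed.
Lemma prvn_lt N n i : (N <= n)%N -> (i < n)%N -> (prvn N i < n)%N.
Proof. rewrite /prvn; case: ifP => ?; [lia|case: ifP => ?; lia]. Qed.
Lemma nxtn_prvn N i : (0 < N)%N -> nxtn N (prvn N i) = i.
Proof.
move=> N0; rewrite /prvn; case: ifP => H1; [|case: ifP => H2];
rewrite /nxtn; repeat (case: ifP => ?); lia.
Qed.
Lemma prvn_nxtn N n i : (N <= n)%N -> (0 < N)%N -> (i < n)%N -> prvn N (nxtn N i) = i.
Proof.
move=> Nn N0 iN; rewrite /nxtn; case: ifP => H1; [|case: ifP => H2];
rewrite /prvn /=; repeat (case: ifP => ?); lia.
Qed.

Definition nxt (n N : nat) (i : 'I_n) : 'I_n := insubd i (nxtn N i).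
Definition prv (n N : nat) (i : 'I_n) : 'I_n := insubd i (prvn N i).

Lemma val_nxt n N (i : 'I_n) : (N <= n)%N -> val (nxt N i) = nxtn N i.
Proof. by move=> Nn; rewrite val_insubd nxtn_lt. Qed.
Lemma val_prv n N (i : 'I_n) : (N <= n)%N -> val (prv N i) = prvn N i.
Proof. by move=> Nn; rewrite val_insubd prvn_lt. Qed.
Lemma nxt_prv n N (i : 'I_n) : (N <= n)%N -> (0 < N)%N -> nxt N (prv N i) = i.
Proof. by move=> Nn N0; apply: val_inj; rewrite val_nxt // val_prv // nxtn_prvn. Qed.
Lemma prv_nxt n N (i : 'I_n) : (N <= n)%N -> (0 < N)%N -> prv N (nxt N i) = i.
Proof. by move=> Nn N0; apply: val_inj; rewrite val_prv // val_nxt // (prvn_nxtn Nn). Qed.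
Lemma nxt_inj n N : (N <= n)%N -> (0 < N)%N -> injective (@nxt n N).
Proof. by move=> Nn N0; apply: (can_inj (g := @prv n N)) => i; rewrite prv_nxt. Qed.
Lemma prv_inj n N : (N <= n)%N -> (0 < N)%N -> injective (@prv n N).
Proof. by move=> Nn N0; apply: (can_inj (g := @nxt n N)) => i; rewrite nxt_prv. Qed.

Lemma sum_delta (R : realType) n (k : 'I_n) (F : 'I_n -> R) :
  \sum_(j < n) (j == k)%:R * F j = F k.
Proof.
rewrite (bigD1 k) //= eqxx mul1r big1 ?addr0 // => j /negbTE ->; by rewrite mul0r.
Qed.

Section Dummy. End Dummy.

Definition Bx (R : realType) n N (x : 'rV[R]_n) : 'rV[R]_n :=
  \row_j ((x 0 j + x 0 (nxt N j)) / 2).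
Definition BTy (R : realType) n N (y : 'rV[R]_n) : 'rV[R]_n :=
  \row_j ((y 0 j + y 0 (prv N j)) / 2).
Definition bv (R : realType) n p (be : R) : 'rV[R]_n :=
  \row_j (if val j == p then be else 0).
Definition Lf (R : realType) n p (Rs be : R) (x y : 'rV[R]_n) : R :=
  Rs * \sum_j ((Bx (2 * p + 1) x - bv n p be) 0 j * y 0 j).

Lemma derive_affine (R : realType) (V : normedModType R) (f : V -> R) (a v : V) (d : R) :
  (forall h : R, f (h *: v + a) = f a + h * d) -> derive f a v = d.
Proof.
move=> H; rewrite /derive.
have -> : (fun h : R => h^-1 *: ((f \o shift a) (h *: v) - f a)) = (fun h => h^-1 * (h * d)).
  by apply/funext => h /=; rewrite H addrC addKr.
apply: cvg_lim => //.
apply: cvg_near_cst.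
near=> h.
have hn0 : h != 0 by near: h; exact: nbhs_dnbhs_neq.
by rewrite mulrA mulVf ?mul1r.
Unshelve. all: by end_near.
Qed.

Lemma gradx_Lf (R : realType) n p (Rs be : R) (z : ('rV[R]_n * 'rV[R]_n)%type) :
  (2 * p + 1 <= n)%N ->
  gradx (Lf p Rs be) z = Rs *: BTy (2 * p + 1) z.2.
Proof.
move=> Nn; apply/rowP => i; rewrite /gradx !mxE.
apply: derive_affine => h.
rewrite /Lf mulrCA -mulrDr; congr (_ * _).
have -> : (z.2 0 i + z.2 0 (prv (2 * p + 1) i)) / 2 =
   \sum_j (((j == i)%:R + (nxt (2 * p + 1) j == i)%:R) / 2 * z.2 0 j).
  rewrite (eq_bigr (fun j => ((j == i)%:R * z.2 0 j + (nxt (2 * p + 1) j == i)%:R * z.2 0 j) / 2)); last by move=> j _; ring.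
  rewrite -mulr_suml big_split /= sum_delta; congr ((_ + _) / 2).
  rewrite -(sum_delta (prv (2 * p + 1) i)); apply: eq_bigr => j _.
  have -> : (nxt (2 * p + 1) j == i) = (j == prv (2 * p + 1) i) => //.
  apply/idP/idP => /eqP H; apply/eqP.
    by rewrite -H prv_nxt //; lia.
  by rewrite H nxt_prv //; lia.
rewrite big_distrr -big_split /=; apply: eq_bigr => j _.
rewrite !mxE /=; ring.
Qed.

Lemma grady_Lf (R : realType) n p (Rs be : R) (z : ('rV[R]_n * 'rV[R]_n)%type) :
  grady (Lf p Rs be) z = Rs *: (Bx (2 * p + 1) z.1 - bv n p be).
Proof.
apply/rowP => i; rewrite /grady [LHS]mxE [RHS]mxE.
apply: derive_affine => h.
rewrite /Lf mulrCA -mulrDr; congr (_ * _).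
have E := sum_delta i (fun j => (Bx (2 * p + 1) z.1 - bv n p be) 0 j).
rewrite /= in E; rewrite -E big_distrr -big_split /=; apply: eq_bigr => j _.
rewrite !mxE /=; ring.
Qed.

Lemma diff_fst_coord (R : realType) (n : nat) (j : 'I_n) (z : ('rV[R]_n * 'rV[R]_n)%type) :
  differentiable (fun p : ('rV[R]_n * 'rV[R]_n)%type => p.1 0 j) z.
Proof.
have lin : linear (fun p : ('rV[R]_n * 'rV[R]_n)%type => p.1 0 j).
  by move=> a u v; rewrite /= !mxE.
pose fM := GRing.isLinear.Build _ _ _ _ _ lin.
pose f : {linear ('rV[R]_n * 'rV[R]_n)%type -> R} := HB.pack (fun p : ('rV[R]_n * 'rV[R]_n)%type => p.1 0 j) fM.
rewrite (_ : (fun _ => _) = f) //; apply/linear_differentiable.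
move=> x; apply: (@continuous_comp _ _ _ fst (fun N : 'rV[R]_n => N 0 j)); first exact: cvg_fst.
exact: coord_continuous.
Qed.
Lemma diff_snd_coord (R : realType) (n : nat) (j : 'I_n) (z : ('rV[R]_n * 'rV[R]_n)%type) :
  differentiable (fun p : ('rV[R]_n * 'rV[R]_n)%type => p.2 0 j) z.
Proof.
have lin : linear (fun p : ('rV[R]_n * 'rV[R]_n)%type => p.2 0 j).
  by move=> a u v; rewrite /= !mxE.
pose fM := GRing.isLinear.Build _ _ _ _ _ lin.
pose f : {linear ('rV[R]_n * 'rV[R]_n)%type -> R} := HB.pack (fun p : ('rV[R]_n * 'rV[R]_n)%type => p.2 0 j) fM.
rewrite (_ : (fun _ => _) = f) //; apply/linear_differentiable.
move=> x; apply: (@continuous_comp _ _ _ snd (fun N : 'rV[R]_n => N 0 j)); first exact: cvg_snd.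
exact: coord_continuous.
Qed.

Lemma diff_Lf (R : realType) n p (Rs be : R) (z : ('rV[R]_n * 'rV[R]_n)%type) :
  differentiable (fun q : ('rV[R]_n * 'rV[R]_n)%type => Lf p Rs be q.1 q.2) z.
Proof.
rewrite /Lf.
have -> : (fun q : ('rV[R]_n * 'rV[R]_n)%type => Rs * \sum_j ((Bx (2 * p + 1) q.1 - bv n p be) 0 j * q.2 0 j))
  = (cst Rs) * \sum_j (fun q : ('rV[R]_n * 'rV[R]_n)%type =>
        ((q.1 0 j + q.1 0 (nxt (2 * p + 1) j)) / 2 - (bv n p be) 0 j) * q.2 0 j).
  by apply/funext => q; rewrite fct_sumE /=; congr (_ * _); apply: eq_bigr => j _; rewrite !mxE.
apply: differentiableM; first exact: differentiable_cst.
apply: differentiable_sum => j.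
apply: (@differentiableM _ _ (fun q : ('rV[R]_n * 'rV[R]_n)%type => (q.1 0 j + q.1 0 (nxt (2 * p + 1) j)) / 2 - (bv n p be) 0 j)
   (fun q : ('rV[R]_n * 'rV[R]_n)%type => q.2 0 j)); last exact: diff_snd_coord.
apply: (@differentiableD _ _ _ (fun q : ('rV[R]_n * 'rV[R]_n)%type => (q.1 0 j + q.1 0 (nxt (2 * p + 1) j)) / 2)
   (fun _ => - (bv n p be) 0 j)); last exact: differentiable_cst.
apply: (@differentiableM _ _ (fun q : ('rV[R]_n * 'rV[R]_n)%type => (q.1 0 j + q.1 0 (nxt (2 * p + 1) j)))
   (fun _ => 2^-1)); last exact: differentiable_cst.
apply: (@differentiableD _ _ _ (fun q : ('rV[R]_n * 'rV[R]_n)%type => q.1 0 j)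
   (fun q : ('rV[R]_n * 'rV[R]_n)%type => q.1 0 (nxt (2 * p + 1) j))); exact: diff_fst_coord.
Qed.

Lemma sqnorm_ge0 (R : realType) n (v : 'rV[R]_n) : 0 <= sqnorm v.
Proof. by rewrite /sqnorm; apply: sumr_ge0 => i _; exact: sqr_ge0. Qed.
Lemma sqnormZ (R : realType) n (c : R) (v : 'rV[R]_n) : sqnorm (c *: v) = c ^+ 2 * sqnorm v.
Proof. by rewrite /sqnorm mulr_sumr; apply: eq_bigr => i _; rewrite mxE exprMn. Qed.
Lemma sqnormN (R : realType) n (v : 'rV[R]_n) : sqnorm (- v) = sqnorm v.
Proof. by rewrite /sqnorm; apply: eq_bigr => i _; rewrite mxE sqrrN. Qed.

Lemma BxB (R : realType) n N (a b : 'rV[R]_n) : Bx N (a - b) = Bx N a - Bx N b.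
Proof. by apply/rowP => j; rewrite !mxE; ring. Qed.
Lemma BTyB (R : realType) n N (a b : 'rV[R]_n) : BTy N (a - b) = BTy N a - BTy N b.
Proof. by apply/rowP => j; rewrite !mxE; ring. Qed.

Lemma sqnorm_Bx (R : realType) n N (v : 'rV[R]_n) : (N <= n)%N -> (0 < N)%N ->
  sqnorm (Bx N v) <= sqnorm v.
Proof.
move=> Nn N0; rewrite /sqnorm.
have E : \sum_(j < n) (v 0 (nxt N j))^+2 = \sum_(j < n) (v 0 j)^+2.
  exact: (esym (reindex_inj (nxt_inj Nn N0))).
apply: (@le_trans _ _ (\sum_(j < n) ((v 0 j)^+2 + (v 0 (nxt N j))^+2) / 2)).
  apply: ler_sum => j _; rewrite mxE; set a := v 0 j; set b := v 0 _; have := sqr_ge0 (a - b); rewrite !expr2 => ?; nra.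
by rewrite -mulr_suml big_split /= E; lra.
Qed.
Lemma sqnorm_BTy (R : realType) n N (v : 'rV[R]_n) : (N <= n)%N -> (0 < N)%N ->
  sqnorm (BTy N v) <= sqnorm v.
Proof.
move=> Nn N0; rewrite /sqnorm.
have E : \sum_(j < n) (v 0 (prv N j))^+2 = \sum_(j < n) (v 0 j)^+2.
  exact: (esym (reindex_inj (prv_inj Nn N0))).
apply: (@le_trans _ _ (\sum_(j < n) ((v 0 j)^+2 + (v 0 (prv N j))^+2) / 2)).
  apply: ler_sum => j _; rewrite mxE; set a := v 0 j; set b := v 0 _; have := sqr_ge0 (a - b); rewrite !expr2 => ?; nra.
by rewrite -mulr_suml big_split /= E; lra.
Qed.

Lemma N0 p : (0 < 2 * p + 1)%N.
Proof. by rewrite addn1. Qed.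

Lemma smooth_Lf (R : realType) n p (Rs be : R) : 0 < Rs -> (2 * p + 1 <= n)%N ->
  smooth Rs (Lf (n := n) p Rs be).
Proof.
move=> Rs0 Nn; split; first by move=> z; exact: diff_Lf.
move=> z z'; rewrite /znorm /Gop.
have -> : ((gradx (Lf p Rs be) z, - grady (Lf p Rs be) z) -
   (gradx (Lf p Rs be) z', - grady (Lf p Rs be) z')).1 =
   Rs *: BTy (2 * p + 1) (z - z').2.
  by rewrite /= !gradx_Lf // -scalerBr -BTyB.
have -> : ((gradx (Lf p Rs be) z, - grady (Lf p Rs be) z) -
   (gradx (Lf p Rs be) z', - grady (Lf p Rs be) z')).2 =
   - (Rs *: Bx (2 * p + 1) (z - z').1).
  by rewrite /= !grady_Lf // -opprD -scalerBr BxB; congr (- (_ *: _)); rewrite opprB addrA subrK.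
rewrite sqnormN !sqnormZ -mulrDr.
have h1 := sqnorm_BTy (z - z').2 Nn (N0 p).
have h2 := sqnorm_Bx (z - z').1 Nn (N0 p).
have Rn : `|Rs| = Rs by rewrite ger0_norm // ltW.
rewrite -[Rs in X in _ <= X]Rn -sqrtr_sqr -sqrtrM ?sqr_ge0 //.
apply: ler_wsqrtr; apply: ler_wpM2l; first exact: sqr_ge0.
lra.
Qed.

Lemma cc_Lf (R : realType) n p (Rs be : R) : convex_concave (Lf (n := n) p Rs be).
Proof.
split.
  move=> y x1 x2 t _; rewrite le_eqVlt; apply/orP; left; apply/eqP.
  rewrite /Lf !mulr_sumr -big_split; apply: eq_bigr => j _; rewrite /= !mxE; ring.
move=> x y1 y2 t _; rewrite le_eqVlt; apply/orP; left; apply/eqP.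
rewrite /Lf !mulr_sumr -big_split; apply: eq_bigr => j _; rewrite /= !mxE; ring.
Qed.

Definition xsf (R : realType) p (be : R) (j : nat) : R :=
  if (j <= p)%N then be * (-1) ^+ (p - j)
  else if (j < 2 * p + 1)%N then be * (-1) ^+ (j - p.+1) else 0.

Lemma xsf_le (R : realType) p (be : R) j : (j <= p)%N -> xsf p be j = be * (-1) ^+ (p - j).
Proof. by move=> h; rewrite /xsf h. Qed.
Lemma xsf_gt (R : realType) p (be : R) j : (p < j)%N -> (j < 2 * p + 1)%N ->
  xsf p be j = be * (-1) ^+ (j - p.+1).
Proof. by move=> h1 h2; rewrite /xsf h2 ifF //; lia. Qed.
Lemma xsf_ge (R : realType) p (be : R) j : (2 * p + 1 <= j)%N -> xsf p be j = 0.
Proof. by move=> h; rewrite /xsf ifF ?ifF //; lia. Qed.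

Ltac sd := solve [done | lia].

Lemma xsf_eq (R : realType) p (be : R) (j : nat) :
  (xsf p be j + xsf p be (nxtn (2 * p + 1) j)) / 2 = if j == p then be else 0.
Proof.
rewrite /nxtn; case: ifP => H1; [|case: ifP => H2].
- case: (ltngtP j p) => Hj.
  + rewrite xsf_le; try sd. rewrite xsf_le; try sd.
    rewrite (_ : (p - j = (p - j.+1).+1)%N); try sd.
    rewrite exprS; ring.
  + rewrite xsf_gt; try sd. rewrite xsf_gt; try sd.
    rewrite (_ : (j.+1 - p.+1 = (j - p.+1).+1)%N); try sd.
    rewrite exprS; ring.
  + subst j; rewrite xsf_le; try sd. rewrite xsf_gt; try sd.
    rewrite ?eqxx subnn subSS subnn expr0; by field.
- have Ej : j = (2 * p)%N by move/eqP: H2; lia.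
  subst j; case: (posnP p) => Hp.
    subst p; rewrite /xsf /= expr0; by field.
  rewrite xsf_gt; try sd. rewrite xsf_le; try sd.
  rewrite ifF; try sd.
  rewrite subn0 (_ : p = (2 * p - p.+1).+1)%N; try sd.
  rewrite exprS -(_ : p = (2 * p - p.+1).+1)%N; try sd. ring.
- rewrite xsf_ge; try sd. rewrite ifF; try sd. by rewrite addr0 mul0r.
Qed.

Definition xs (R : realType) n p (be : R) : 'rV[R]_n := \row_j xsf p be j.

Lemma Bx_xs (R : realType) n p (be : R) : (2 * p + 1 <= n)%N ->
  Bx (2 * p + 1) (xs n p be) = bv n p be.
Proof. by move=> Nn; apply/rowP => j; rewrite !mxE val_nxt // xsf_eq. Qed.

Lemma Lf_xs (R : realType) n p (Rs be : R) y : (2 * p + 1 <= n)%N ->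
  Lf p Rs be (xs n p be) y = 0.
Proof.
move=> Nn; rewrite /Lf Bx_xs // subrr big1 ?mulr0 // => j _; by rewrite mxE mul0r.
Qed.
Lemma Lf_0 (R : realType) n p (Rs be : R) (x : 'rV[R]_n) : Lf p Rs be x 0 = 0.
Proof. by rewrite /Lf big1 ?mulr0 // => j _; rewrite [X in _ * X]mxE mulr0. Qed.

Lemma class_Lf (R : realType) n p (Rs be : R) : 0 < Rs -> (2 * p + 1 <= n)%N ->
  problem_class Rs (Lf (n := n) p Rs be).
Proof.
move=> Rs0 Nn; split; first exact: smooth_Lf.
split; first exact: cc_Lf.
exists (xs n p be, 0) => x y /=; rewrite !Lf_xs // Lf_0; by split.
Qed.

Lemma sqnorm_xs (R : realType) n p (be : R) : (2 * p + 1 <= n)%N ->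
  sqnorm (xs n p be) = (2 * p + 1)%:R * be ^+ 2.
Proof.
move=> Nn; rewrite /sqnorm.
under eq_bigr do rewrite mxE.
rewrite -(big_mkord xpredT (fun j => xsf p be j ^+ 2)).
rewrite (@big_cat_nat _ _ _ (2 * p + 1)) //=.
rewrite [X in _ + X]big_nat_cond [X in _ + X]big1 ?addr0; last first.
  by move=> i /andP[/andP[Hi _] _]; rewrite xsf_ge // expr0n.
rewrite (eq_big_nat _ _ (F2 := fun _ => be ^+ 2)); last first.
  move=> i /andP[_ Hi]; case: (leqP i p) => Hip.
    by rewrite xsf_le // exprMn sqrr_sign mulr1.
  by rewrite xsf_gt // exprMn sqrr_sign mulr1.
by rewrite sumr_const_nat subn0 mulr_natl.
Qed.

Lemma cs_lite (R : realType) n (a v : 'I_n -> R) :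
  (\sum_j a j * v j) ^+ 2 <= (\sum_j a j ^+ 2) * (\sum_j v j ^+ 2).
Proof.
set s := \sum_j a j * v j; set A := \sum_j a j ^+ 2; set V := \sum_j v j ^+ 2.
have A0 : 0 <= A by apply: sumr_ge0 => j _; exact: sqr_ge0.
have E : \sum_j (A * v j - s * a j) ^+ 2 = A * (A * V - s ^+ 2).
  rewrite (eq_bigr (fun j => A ^+ 2 * v j ^+ 2 + (- (2 * A * s)) * (a j * v j) + s ^+ 2 * a j ^+ 2));
    last by move=> j _; ring.
  rewrite !big_split /= -!mulr_sumr -/s -/A -/V; ring.
have H : 0 <= A * (A * V - s ^+ 2) by rewrite -E; apply: sumr_ge0 => j _; exact: sqr_ge0.
case: (ltrP 0 A) => HA.
  by move: H; rewrite pmulr_rge0 // subr_ge0.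
have A00 : A = 0 by apply/eqP; rewrite eq_le HA A0.
have aj0 : forall j, a j = 0.
  move=> j; apply/eqP; rewrite -sqrf_eq0 eq_le sqr_ge0 andbT.
  rewrite -A00 /A (bigD1 j) //= lerDl; apply: sumr_ge0 => i _; exact: sqr_ge0.
rewrite /s big1 ?expr0n ?A00 ?mul0r // => j _; by rewrite aj0 mul0r.
Qed.

Definition av (R : realType) (N j : nat) : R := if (j < N)%N then (-1) ^+ j else 0.

Lemma av_prv (R : realType) N i : (i != 0)%N -> av R N i + av R N (prvn N i) = 0.
Proof.
move=> i0; rewrite /av /prvn (negbTE i0); case: (ltnP 0 i) => H1; case: (ltnP i N) => H2 /=.
- rewrite ifT; last lia.
  rewrite -{1}(prednK H1) exprS; ring.
- rewrite ifF; last lia.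
  by rewrite addr0.
- lia.
- lia.
Qed.

Lemma cert (R : realType) n N (x : 'rV[R]_n) : (N <= n)%N -> (0 < N)%N ->
  (forall i : 'I_n, val i = 0%N -> x 0 i = 0) ->
  \sum_(j < n) av R N j * (x 0 j + x 0 (nxt N j)) = 0.
Proof.
move=> Nn N0 Hx.
under eq_bigr do rewrite mulrDr.
rewrite big_split /= [X in _ + X](reindex_inj (prv_inj Nn N0)) /=.
under [X in _ + X]eq_bigr do rewrite nxt_prv //.
rewrite -big_split /= big1 // => i _.
case: (eqVneq (val i) 0%N) => Hi; first by rewrite Hx // !mulr0 addr0.
by rewrite -mulrDl val_prv // av_prv // mul0r.
Qed.

Lemma inner_val (R : realType) n p (be : R) (x : 'rV[R]_n) : (2 * p + 1 <= n)%N ->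
  (forall i : 'I_n, val i = 0%N -> x 0 i = 0) ->
  \sum_(j < n) av R (2 * p + 1) j * (Bx (2 * p + 1) x - bv n p be) 0 j = - ((-1) ^+ p * be).
Proof.
move=> Nn Hx.
have Hp : (p < n)%N by lia.
rewrite (eq_bigr (fun j : 'I_n => (av R (2 * p + 1) j * (x 0 j + x 0 (nxt (2 * p + 1) j))) / 2
   - av R (2 * p + 1) j * (if val j == p then be else 0))); last first.
  by move=> j _; rewrite !mxE; ring.
rewrite sumrB -mulr_suml cert // ?N0 // mul0r sub0r; congr (- _).
rewrite (bigD1 (Ordinal Hp)) //= eqxx big1 ?addr0.
  by rewrite /av ifT //; lia.
move=> j Hj; rewrite ifF ?mulr0 //; apply/negbTE; apply: contra Hj => /eqP Hj.
by apply/eqP; apply: val_inj.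
Qed.

Definition zon (R : realType) n (S : nat -> Prop) (v : 'rV[R]_n) :=
  forall i : 'I_n, S (val i) -> v 0 i = 0.
Definition Xs (p m i : nat) : Prop := (i + m < p.+1)%N \/ (p + m < i)%N.
Definition Ys (p m i : nat) : Prop := (i + m < p)%N \/ (p + m < i)%N.

Lemma zon_comb (R : realType) n j (c : 'I_j -> R) (w : 'I_j -> 'rV[R]_n) S :
  (forall i, zon S (w i)) -> zon S (\sum_i c i *: w i).
Proof.
move=> H k Sk; rewrite summxE big1 // => i _; by rewrite mxE H // mulr0.
Qed.
Lemma zon_scale (R : realType) n (c : R) (v : 'rV[R]_n) S : zon S v -> zon S (c *: v).
Proof. by move=> H k Sk; rewrite mxE H // mulr0. Qed.
Lemma zon0 (R : realType) n S : zon S (0 : 'rV[R]_n).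
Proof. by move=> k _; rewrite mxE. Qed.
Lemma zonX_mono (R : realType) n p m m' (v : 'rV[R]_n) :
  (m <= m')%N -> zon (Xs p m) v -> zon (Xs p m') v.
Proof. move=> h H k Sk; apply: H; rewrite /Xs in Sk *; lia. Qed.
Lemma zonY_mono (R : realType) n p m m' (v : 'rV[R]_n) :
  (m <= m')%N -> zon (Ys p m) v -> zon (Ys p m') v.
Proof. move=> h H k Sk; apply: H; rewrite /Ys in Sk *; lia. Qed.

Lemma BTy_step (R : realType) n p m (y : 'rV[R]_n) : (2 * p + 1 <= n)%N -> (m < p)%N ->
  zon (Ys p m) y -> zon (Xs p m.+1) (BTy (2 * p + 1) y).
Proof.
move=> Nn hm H i Si; rewrite mxE.
have ilt := ltn_ord i.
rewrite H; last by rewrite /Xs /Ys in Si *; lia.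
rewrite H ?addr0 ?mul0r // val_prv // /prvn /Ys; rewrite /Xs /= in Si.
case: (ltnP 0 i) => h1; case: (ltnP i (2 * p + 1)) => h2 /=; try lia;
case: ifP => h3; lia.
Qed.

Lemma Bx_step (R : realType) n p m (be : R) (x : 'rV[R]_n) : (2 * p + 1 <= n)%N -> (m <= p)%N ->
  zon (Xs p m) x -> zon (Ys p m) (Bx (2 * p + 1) x - bv n p be).
Proof.
move=> Nn hm H i Si; rewrite !mxE.
have ilt := ltn_ord i.
rewrite H; last by rewrite /Xs /Ys in Si *; lia.
rewrite H; last first.
  rewrite val_nxt // /nxtn /Xs; rewrite /Ys /= in Si.
  case: ifP => h1; [lia|case: ifP => h2; lia].
rewrite ifF; last by rewrite /Ys /= in Si; apply/negbTE/eqP => /= E; lia.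
by rewrite addr0 mul0r subrr.
Qed.

Lemma BTy0 (R : realType) n N : BTy N (0 : 'rV[R]_n) = 0.
Proof. by apply/rowP => j; rewrite !mxE addr0 mul0r. Qed.

Lemma saddle_Lf (R : realType) n p (Rs be : R) : (2 * p + 1 <= n)%N ->
  is_saddle (Lf (n := n) p Rs be) (xs n p be, 0).
Proof. by move=> Nn x y /=; rewrite !Lf_xs // Lf_0. Qed.

Lemma sum_av2 (R : realType) n N : (N <= n)%N -> \sum_(j < n) av R N j ^+ 2 = N%:R.
Proof.
move=> Nn.
rewrite -(big_mkord xpredT (fun j => av R N j ^+ 2)).
rewrite (@big_cat_nat _ _ _ N) //=.
rewrite [X in _ + X]big_nat_cond [X in _ + X]big1 ?addr0; last first.
  by move=> i /andP[/andP[Hi _] _]; rewrite /av ifF ?expr0n //; lia.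
rewrite (eq_big_nat _ _ (F2 := fun _ => 1)); last first.
  by move=> i /andP[_ Hi]; rewrite /av Hi sqrr_sign.
by rewrite sumr_const_nat subn0.
Qed.

Lemma nat1 i j : (0 < i)%N -> (i < j)%N -> (((i.-1)./2).+1 <= j./2)%N.
Proof. rewrite -!divn2; lia. Qed.
Lemma nat2 i k : (0 < i)%N -> (i < k)%N -> ((i.-1)./2 < k./2)%N.
Proof. rewrite -!divn2; lia. Qed.
Lemma nat3 i j : (i < j)%N -> (i./2 <= (j.-1)./2)%N.
Proof. rewrite -!divn2; lia. Qed.
Lemma nat4 i k : (i <= k)%N -> (i./2 <= k./2)%N.
Proof. rewrite -!divn2; lia. Qed.
Lemma nat5 k : (2 * k./2 + 1 <= k.+1)%N.
Proof. rewrite -!divn2; lia. Qed.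

Unset Implicit Arguments.

Theorem corollary3 (R : realType) (Rs Dd : R) (k n : nat) :
  0 < Rs -> 0 < Dd -> (k.+2 <= n)%N ->
  forall A : algorithm R n, in_Asep Rs A ->
  ((Rs ^+ 2 * Dd ^+ 2 / ((2 * k./2 + 1)%N%:R) ^+ 2)%:E
     <= worst_case Rs Dd A k)%E.
Proof.
move=> Rs0 Dd0 kn A HA.
have Nn : (2 * k./2 + 1 <= n)%N by have := nat5 k; lia.
set p := k./2 in Nn *.
set N := (2 * p + 1)%N in Nn *.
have NR : (0 : R) < N%:R by rewrite ltr0n /N addn1.
set be := Dd / Num.sqrt N%:R.
have be2 : be ^+ 2 * N%:R = Dd ^+ 2.
  rewrite /be exprMn exprVn sqr_sqrtr ?ltW // -mulrA mulVf ?mulr1 //.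
  by rewrite gt_eqF.
set L := Lf (n := n) p Rs be.
have HL : problem_class Rs L by exact: class_Lf.
set z0 : ('rV[R]_n * 'rV[R]_n)%type := (0, 0).
have claim : forall j, (j <= k)%N ->
    zon (Xs p (j./2)) (iterate A L z0 j).1 /\
    zon (Ys p ((j.-1)./2)) (iterate A L z0 j).2 /\
    (j = 0%N -> (iterate A L z0 j).2 = 0).
  elim/ltn_ind => j IH hj.
  case: (posnP j) => [->|j0].
    by split; [exact: zon0|split; [exact: zon0|]].
  have [[cx Ex] [cy Ey]] := HA L z0 j HL.
  split.
    rewrite Ex /= add0r; apply: zon_comb => i; rewrite gradx_Lf //; apply: zon_scale.
    have hi : (i < j)%N := ltn_ord i.
    have [h1 [h2 h3]] := IH i hi (ltnW (leq_trans hi hj)).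
    case: (posnP i) => i0.
      by rewrite h3 // BTy0; exact: zon0.
    apply: (@zonX_mono _ _ _ ((i.-1)./2).+1); first exact: nat1.
    apply: BTy_step => //; apply: nat2 => //; exact: leq_trans hi hj.
  split; last by move=> j00; move: j0; rewrite j00.
  rewrite Ey /= add0r; apply: zon_comb => i; rewrite grady_Lf; apply: zon_scale.
  have hi : (i < j)%N := ltn_ord i.
  have [h1 [h2 h3]] := IH i hi (ltnW (leq_trans hi hj)).
  apply: (@zonY_mono _ _ _ (i./2)); first exact: nat3.
  apply: Bx_step => //; apply: nat4; exact: ltnW (leq_trans hi hj).
have [hx _] := claim k (leqnn k).
set x := (iterate A L z0 k).1 in hx.
have Hx0 : forall i : 'I_n, val i = 0%N -> x 0 i = 0.
  by move=> i i0; apply: hx; rewrite /Xs i0; left; rewrite /p; lia.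
have Hin := inner_val be Nn Hx0.
have Hcs := cs_lite (fun j : 'I_n => av R N j) (fun j => (Bx N x - bv n p be) 0 j).
rewrite /= Hin sum_av2 // sqrrN exprMn sqrr_sign mul1r in Hcs.
have key : be ^+ 2 <= N%:R * sqnorm (Bx N x - bv n p be) by exact: Hcs.
apply: (@le_trans _ _ (sqgradnorm L (iterate A L z0 k))%:E); last first.
  apply: ereal_sup_ubound; exists L, z0; split => //.
  exists (xs n p be, 0); split; first exact: saddle_Lf.
  rewrite /znorm /z0 /= !sub0r sqnormN sqnorm_xs // oppr0.
  rewrite (_ : sqnorm (0 : 'rV[R]_n) = 0); last first.
    by rewrite /sqnorm big1 // => j _; rewrite mxE expr0n.
  by rewrite addr0 mulrC be2 sqrtr_sqr ger0_norm // ltW.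
rewrite lee_fin /sqgradnorm grady_Lf sqnormZ -/x.
have G0 := sqnorm_ge0 (gradx L (iterate A L z0 k)).
set G := sqnorm (gradx L (iterate A L z0 k)) in G0 *.
set S := sqnorm (Bx N x - bv n p be) in key *.
rewrite -be2 ler_pdivrMr ?exprn_gt0 //.
have h1 : Rs ^+ 2 * N%:R * be ^+ 2 <= Rs ^+ 2 * N%:R * (N%:R * S).
  by apply: ler_wpM2l => //; apply: mulr_ge0; [exact: sqr_ge0|exact: ltW].
have h2 : 0 <= G * N%:R ^+ 2 by apply: mulr_ge0 => //; exact: sqr_ge0.
nra.
Qed.
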